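(* If the communication graph of a system is a simple chain (a path graph) of $n\ge2$ trajectories, then its isolation-resilience is $n-2$.
   Context: Model. A system consists of pairwise disjoint unit circles $C_1,\dots,C_n$ in the plane (trajectories) and a communication range $r>0$. Its communication graph $G$ has vertex set $\{C_1,\dots,C_n\}$, $C_i,C_j$ adjacent iff the distance between their centres is at most $2+r$ (the circles need not lie on a straight line). Positions on a circle are angles (mod $2\pi$). For an edge $(i,j)$, the link position $\phi_{ij}$ is the angle of the point of $C_i$ closest to $C_j$. A schedule $F=(f,g)$ assigns each circle a starting angle $f(C_i)$ and direction $g(C_i)\in\{1,-1\}$; a robot following it on $C_i$ is at $f(C_i)+g(C_i)2\pi t$ at time $t$. $F$ is a synchronization schedule if $g(C_i)=-g(C_j)$ for adjacent circles and robots following $F$ on adjacent $C_i,C_j$ are at $\phi_{ij},\phi_{ji}$ at exactly the same times. A synchronized communication system (SCS) consists of $n$ robots, initially one per circle, following a synchronization schedule, with the switching rule: when a robot on $C_i$ reaches $\phi_{ij}$ and $C_j$ is empty, it instantly passes to $C_j$ and follows the schedule of $C_j$; if $C_j$ has a robot, they meet and each stays on its circle. A partial SCS arises by letting some robots leave (possibly at different times); remaining robots never leave. A surviving robot $u$ starves if every time $u$ arrives at a link position $\phi_{ij}$ of its current circle $C_i$, the circle $C_j$ is empty; the system is in starvation state if all surviving robots starve. The isolation-resilience is the largest $k$ such that, whichever $k$ robots leave, the system does not fall into starvation state. *)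

(* Defs.v *)
From Stdlib Require Import Reals Lra Lia List.
Open Scope R_scope.

(* A system: n unit circles C_0..C_{n-1} with centres (cx i, cy i),
   communication range r, and a schedule F = (f, g):
   f i = starting angle on C_i, g i = direction (+1 / -1). *)
Record system := mkSystem {
  n  : nat;
  cx : nat -> R;
  cy : nat -> R;
  r  : R;
  f  : nat -> R;
  g  : nat -> R
}.

Definition dist (sy : system) (i j : nat) : R :=
  sqrt ((cx sy i - cx sy j) ^ 2 + (cy sy i - cy sy j) ^ 2).

(* Pairwise disjoint unit circles (equal radii: disjoint iff centres at distance > 2). *)
Definition disjoint_circles (sy : system) : Prop :=
  forall i j, (i < n sy)%nat -> (j < n sy)%nat -> i <> j -> 2 < dist sy i j.

Definition valid_system (sy : system) : Prop :=
  0 < r sy /\ disjoint_circles sy /\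
  (forall i, (i < n sy)%nat -> g sy i = 1 \/ g sy i = -1).

Definition adj (sy : system) (i j : nat) : Prop :=
  (i < n sy)%nat /\ (j < n sy)%nat /\ i <> j /\ dist sy i j <= 2 + r sy.

Definition is_path_graph (sy : system) : Prop :=
  exists p : nat -> nat,
    (forall i, (i < n sy)%nat -> (p i < n sy)%nat) /\
    (forall i j, (i < n sy)%nat -> (j < n sy)%nat -> p i = p j -> i = j) /\
    (forall i j, (i < n sy)%nat -> (j < n sy)%nat ->
       (adj sy i j <-> (p i = Datatypes.S (p j) \/ p j = Datatypes.S (p i)))).

Definition angle (sy : system) (i : nat) (t : R) : R :=
  f sy i + g sy i * 2 * PI * t.

Definition pos (sy : system) (i : nat) (t : R) : R * R :=
  (cx sy i + cos (angle sy i t), cy sy i + sin (angle sy i t)).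

Definition closest (sy : system) (i j : nat) : R * R :=
  (cx sy i + (cx sy j - cx sy i) / dist sy i j,
   cy sy i + (cy sy j - cy sy i) / dist sy i j).

Definition at_link (sy : system) (i j : nat) (t : R) : Prop :=
  pos sy i t = closest sy i j.

Definition sync_schedule (sy : system) : Prop :=
  forall i j, adj sy i j ->
    g sy i = - g sy j /\ (forall t, at_link sy i j t <-> at_link sy j i t).

(* ---- Dynamics of a (partial) SCS ----
   Robots are numbered 0..n-1; robot u starts on C_u at time 0.
   L = list of robots that leave, lt u = time at which robot u leaves.
   An execution e : robot -> time -> option circle gives the circle of
   each robot at time t >= 0 (None = has left), *after* processing the
   instantaneous events happening at time t (right-continuous
   convention).  [prev e u t o] says o is the state of u just before t. *)

Definition prev (e : nat -> R -> option nat) (u : nat) (t : R) (o : option nat) : Prop :=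
  (t = 0 /\ o = Some u) \/
  (0 < t /\ exists eps, 0 < eps /\
     forall s, 0 <= s -> t - eps < s -> s < t -> e u s = o).

Definition has_left (L : list nat) (lt : nat -> R) (u : nat) (t : R) : Prop :=
  In u L /\ lt u <= t.

Definition empty_before (sy : system) (e : nat -> R -> option nat) (j : nat) (t : R) : Prop :=
  forall v, (v < n sy)%nat -> ~ prev e v t (Some j).

Definition transition (sy : system) (L : list nat) (lt : nat -> R)
    (e : nat -> R -> option nat) (u : nat) (t : R) (o : option nat) : Prop :=
  (has_left L lt u t -> e u t = None) /\
  (~ has_left L lt u t ->
     match o with
     | None => e u t = None
     | Some i =>
         (forall j, adj sy i j -> at_link sy i j t -> empty_before sy e j t ->
            e u t = Some j) /\
         ((forall j, adj sy i j -> at_link sy i j t -> ~ empty_before sy e j t) ->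
            e u t = Some i)
     end).

Definition execution (sy : system) (L : list nat) (lt : nat -> R)
    (e : nat -> R -> option nat) : Prop :=
  (forall u t, (u < n sy)%nat -> 0 <= t -> exists o, prev e u t o) /\
  (forall u t, (u < n sy)%nat -> 0 <= t ->
     exists eps, 0 < eps /\ forall s, t <= s -> s < t + eps -> e u s = e u t) /\
  (forall u t o, (u < n sy)%nat -> 0 <= t -> prev e u t o ->
     transition sy L lt e u t o).

Definition surviving (sy : system) (L : list nat) (u : nat) : Prop :=
  (u < n sy)%nat /\ ~ In u L.

Definition starves_from (sy : system) (e : nat -> R -> option nat) (T : R) (u : nat) : Prop :=
  forall t i j, T <= t -> prev e u t (Some i) -> adj sy i j -> at_link sy i j t ->
    empty_before sy e j t.

Definition falls_into_starvation (sy : system) (L : list nat)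
    (e : nat -> R -> option nat) : Prop :=
  exists T, 0 <= T /\ forall u, surviving sy L u -> starves_from sy e T u.

Definition departure (sy : system) (k : nat) (L : list nat) (lt : nat -> R) : Prop :=
  NoDup L /\ length L = k /\ (forall u, In u L -> (u < n sy)%nat) /\
  (forall u, In u L -> 0 <= lt u).

Definition tolerates (sy : system) (k : nat) : Prop :=
  (k <= n sy)%nat /\
  forall L lt, departure sy k L lt ->
    forall e, execution sy L lt e -> ~ falls_into_starvation sy L e.

Definition isolation_resilience (sy : system) (k : nat) : Prop :=
  tolerates sy k /\ forall k', tolerates sy k' -> (k' <= k)%nat.

(* Main.v *)
Require Import Defs.
From Stdlib Require Import Reals Lra Lia List.
From Stdlib Require Import Classical ClassicalEpsilon ZArith.
Import Defs.
Open Scope R_scope.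

Lemma real_ind (t0 : R) (Q : R -> Prop) :
  Q t0 ->
  (forall t, t0 < t -> (forall s, t0 <= s < t -> Q s) -> Q t) ->
  (forall t, t0 <= t -> Q t -> exists eps, 0 < eps /\ forall s, t <= s < t + eps -> Q s) ->
  forall t, t0 <= t -> Q t.
Proof.
  intros H0 Hstep Hext t1 Ht1.
  apply NNPP; intro Hn.
  set (E := fun x => t0 <= x <= t1 /\ forall s, t0 <= s <= x -> Q s).
  assert (HE : exists x, E x).
  { exists t0. split. lra. intros s Hs. replace s with t0 by lra. exact H0. }
  assert (HB : bound E). { exists t1. intros x [Hx _]. lra. }
  destruct (completeness E HB HE) as [m [Hub Hlub]].
  assert (Hm0 : t0 <= m).
  { apply Hub. split. lra. intros s Hs. replace s with t0 by lra; exact H0. }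
  assert (Hm1 : m <= t1). { apply Hlub. intros x [Hx _]. lra. }
  assert (Hbelow : forall s, t0 <= s < m -> Q s).
  { intros s Hs. destruct (classic (exists x, E x /\ s <= x)) as [[x [[_ Hx] Hsx]]|Hno].
    - apply Hx; lra.
    - exfalso. assert (m <= s).
      { apply Hlub. intros x Ex. destruct (Rle_lt_dec x s). lra.
        exfalso; apply Hno; exists x; split; auto; lra. }
      lra. }
  assert (Qm : Q m).
  { destruct (Req_dec m t0) as [->|Hne]. exact H0. apply Hstep. lra. exact Hbelow. }
  destruct (Hext m Hm0 Qm) as [eps [Heps Hq]].
  destruct (Req_dec m t1) as [<-|Hne]. apply Hn; exact Qm.
  assert (Hx1 : Rmin (m + eps/2) t1 <= m + eps/2) by apply Rmin_l.
  assert (Hx2 : Rmin (m + eps/2) t1 <= t1) by apply Rmin_r.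
  assert (Hx3 : m < Rmin (m + eps/2) t1) by (apply Rmin_glb_lt; lra).
  assert (Ex : E (Rmin (m + eps/2) t1)).
  { split. lra.
    intros s Hs. destruct (Rlt_le_dec s m). apply Hbelow; lra. apply Hq. lra. }
  assert (Rmin (m + eps/2) t1 <= m) by (apply Hub; exact Ex).
  lra.
Qed.

Lemma sin_2kPI k : sin (2 * IZR k * PI) = 0.
Proof. apply sin_eq_0_1. exists (2 * k)%Z. rewrite mult_IZR. ring. Qed.

Lemma cos_2kPI k : cos (2 * IZR k * PI) = 1.
Proof.
  replace (2 * IZR k * PI) with (2 * (IZR k * PI)) by ring.
  rewrite cos_2a_sin. rewrite (sin_eq_0_1 (IZR k * PI)). ring. exists k; ring.
Qed.

Lemma cos_periodZ x k : cos (x + 2 * IZR k * PI) = cos x.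
Proof. rewrite cos_plus, cos_2kPI, sin_2kPI. ring. Qed.

Lemma sin_periodZ x k : sin (x + 2 * IZR k * PI) = sin x.
Proof. rewrite sin_plus, cos_2kPI, sin_2kPI. ring. Qed.

Lemma cos_sin_eq a b : cos a = cos b -> sin a = sin b ->
  exists k : Z, a = b + 2 * IZR k * PI.
Proof.
  intros Hc Hs.
  assert (H1 : cos (a - b) = 1).
  { rewrite cos_minus, Hc, Hs. pose proof (sin2_cos2 b). unfold Rsqr in H. lra. }
  replace (a - b) with (2 * ((a - b)/2)) in H1 by field.
  rewrite cos_2a_sin in H1.
  assert (sin ((a-b)/2) = 0) by nra.
  destruct (sin_eq_0_0 _ H) as [k Hk]. exists k. lra.
Qed.

Lemma angle_exists ux uy : ux * ux + uy * uy = 1 ->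
  exists th, cos th = ux /\ sin th = uy.
Proof.
  intros H.
  assert (Hb : -1 <= ux <= 1) by (split; nra).
  assert (Hs : sqrt (1 - ux²) = Rabs uy).
  { rewrite <- sqrt_Rsqr_abs. f_equal. unfold Rsqr. lra. }
  destruct (Rle_lt_dec 0 uy).
  - exists (acos ux). split. apply cos_acos; auto.
    rewrite sin_acos by auto. rewrite Hs. apply Rabs_right. lra.
  - exists (- acos ux). split. rewrite cos_neg. apply cos_acos; auto.
    rewrite sin_neg, sin_acos by auto. rewrite Hs. rewrite Rabs_left by lra. ring.
Qed.


Lemma dist_sq sy i j : dist sy i j * dist sy i j =
  (cx sy j - cx sy i) * (cx sy j - cx sy i) + (cy sy j - cy sy i) * (cy sy j - cy sy i).
Proof.
  unfold dist. rewrite sqrt_sqrt. ring. apply Rplus_le_le_0_compat; apply pow2_ge_0.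
Qed.

Lemma at_link_iff sy i j t : at_link sy i j t <->
  cos (angle sy i t) = (cx sy j - cx sy i) / dist sy i j /\
  sin (angle sy i t) = (cy sy j - cy sy i) / dist sy i j.
Proof.
  unfold at_link, pos, closest. split.
  - intros H. injection H as H1 H2. split; lra.
  - intros [H1 H2]. rewrite H1, H2. reflexivity.
Qed.

Lemma link_char sy i j : 0 < dist sy i j -> (g sy i = 1 \/ g sy i = -1) ->
  exists tau, forall t, at_link sy i j t <-> exists k : Z, t = tau + IZR k.
Proof.
  intros Hd Hg.
  set (ux := (cx sy j - cx sy i) / dist sy i j).
  set (uy := (cy sy j - cy sy i) / dist sy i j).
  assert (Hu : ux * ux + uy * uy = 1).
  { unfold ux, uy. pose proof (dist_sq sy i j).
    set (D := dist sy i j) in *.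
    apply (Rmult_eq_reg_l (D * D)). 2: nra.
    field_simplify. 2: lra. nra. }
  destruct (angle_exists ux uy Hu) as [th [Hc Hs]].
  pose proof PI_RGT_0 as HPI.
  exists (g sy i * (th - f sy i) / (2 * PI)).
  intros t. rewrite at_link_iff. fold ux uy. unfold angle. split.
  - intros [H1 H2]. rewrite <- Hc in H1. rewrite <- Hs in H2.
    destruct (cos_sin_eq _ _ H1 H2) as [k Hk].
    destruct Hg as [Hg|Hg]; rewrite Hg in *.
    + exists k. apply (Rmult_eq_reg_l (2 * PI)). 2: lra.
      field_simplify. 2: lra. lra.
    + exists (- k)%Z. rewrite opp_IZR. apply (Rmult_eq_reg_l (2 * PI)). 2: lra.
      field_simplify. 2: lra. lra.
  - intros [k ->]. rewrite <- Hc, <- Hs.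
    destruct Hg as [Hg|Hg]; rewrite Hg.
    + replace (f sy i + 1 * 2 * PI * (1 * (th - f sy i) / (2 * PI) + IZR k))
        with (th + 2 * IZR k * PI) by (field; lra).
      rewrite cos_periodZ, sin_periodZ. auto.
    + replace (f sy i + -1 * 2 * PI * (-1 * (th - f sy i) / (2 * PI) + IZR k))
        with (th + 2 * IZR (- k) * PI) by (rewrite opp_IZR; field; lra).
      rewrite cos_periodZ, sin_periodZ. auto.
Qed.


Definition char (P : R -> Prop) := exists tau, forall t, P t <-> exists k : Z, t = tau + IZR k.

Lemma char_next (P : R -> Prop) : char P -> forall s, exists t, s < t <= s + 1 /\ P t /\
  forall t', s < t' < t -> ~ P t'.
Proof.
  intros [tau Ht] s. destruct (archimed (s - tau)) as [H1 H2].
  exists (tau + IZR (up (s - tau))). split. lra. split. apply Ht. eauto.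
  intros t' Ht' HP. apply Ht in HP. destruct HP as [k ->].
  assert (IZR (up (s - tau) - 1) < IZR k) by (rewrite minus_IZR; lra).
  apply lt_IZR in H.
  assert (IZR k < IZR (up (s - tau))) by lra. apply lt_IZR in H0. lia.
Qed.

Lemma char_gap (P : R -> Prop) : char P -> forall s t, P s -> P t -> s < t -> s + 1 <= t.
Proof.
  intros [tau Ht] s t Hs Ht' Hlt. apply Ht in Hs. apply Ht in Ht'.
  destruct Hs as [k1 ->]. destruct Ht' as [k2 ->].
  assert (IZR k1 < IZR k2) by lra. apply lt_IZR in H.
  assert (IZR (k1 + 1) <= IZR k2) by (apply IZR_le; lia). rewrite plus_IZR in H0. lra.
Qed.

Lemma char_shift (P : R -> Prop) : char P -> forall s, P s -> P (s + 1).
Proof.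
  intros [tau Ht] s Hs. apply Ht in Hs. destruct Hs as [k ->]. apply Ht.
  exists (k + 1)%Z. rewrite plus_IZR. ring.
Qed.

Lemma next_link sy (c : nat) s :
  (forall d, adj sy c d -> char (at_link sy c d)) ->
  (exists d, adj sy c d) ->
  exists d t, adj sy c d /\ s < t <= s + 1 /\ at_link sy c d t /\
    (forall t', s < t' < t -> forall d', adj sy c d' -> ~ at_link sy c d' t').
Proof.
  intros Hch Hex.
  assert (Hm : forall m, (exists d, (d < m)%nat /\ adj sy c d) ->
    exists d t, adj sy c d /\ s < t <= s + 1 /\ at_link sy c d t /\
    (forall t', s < t' < t -> forall d', (d' < m)%nat -> adj sy c d' -> ~ at_link sy c d' t')).
  { induction m as [|m IH].
    - intros [d [Hd _]]. lia.
    - intros Hexm. destruct (classic (adj sy c m)) as [Ham|Hnm].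
      + destruct (char_next _ (Hch m Ham) s) as [tm [Htm1 [Htm2 Htm3]]].
        destruct (classic (exists d, (d < m)%nat /\ adj sy c d)) as [Hlt|Hnlt].
        * destruct (IH Hlt) as [d1 [t1 [Ha1 [Ht1 [Hl1 Hf1]]]]].
          destruct (Rle_lt_dec t1 tm).
          -- exists d1, t1. refine (conj _ (conj _ (conj _ _))); auto. intros t' Ht' d' Hd' Had'.
             destruct (Nat.eq_dec d' m) as [->|Hne]. apply Htm3. lra.
             apply Hf1; auto. lia.
          -- exists m, tm. refine (conj _ (conj _ (conj _ _))); auto; try lra. intros t' Ht' d' Hd' Had'.
             destruct (Nat.eq_dec d' m) as [->|Hne]. apply Htm3. lra.
             apply Hf1; auto. lra. lia.
        * exists m, tm. refine (conj _ (conj _ (conj _ _))); auto; try lra. intros t' Ht' d' Hd' Had'.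
          destruct (Nat.eq_dec d' m) as [->|Hne]. apply Htm3. lra.
          exfalso; apply Hnlt. exists d'. split; auto. lia.
      + destruct Hexm as [d [Hd Had]].
        assert (Hdm : d <> m) by (intro; subst; contradiction).
        assert (Hdm' : (d < m)%nat) by lia.
        destruct (IH (ex_intro _ d (conj Hdm' Had)))
          as [d1 [t1 [Ha1 [Ht1 [Hl1 Hf1]]]]].
        exists d1, t1. refine (conj _ (conj _ (conj _ _))); auto. intros t' Ht' d' Hd' Had'.
        destruct (Nat.eq_dec d' m) as [->|Hne]. contradiction.
        apply Hf1; auto. lia. }
  destruct Hex as [d Hd].
  destruct (Hm (n sy) (ex_intro _ d (conj (proj1 (proj2 Hd)) Hd))) as [d1 [t1 [H1 [H2 [H3 H4]]]]].
  exists d1, t1. refine (conj _ (conj _ (conj _ _))); auto. intros t' Ht' d' Had'. apply H4; auto. apply Had'.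
Qed.

Lemma closest_inj sy i j k : valid_system sy -> adj sy i j -> adj sy i k -> ~ adj sy j k ->
  j <> k -> closest sy i j <> closest sy i k.
Proof.
  intros [Hr [Hdis Hg]] [Hi [Hj [Hij Hdj]]] [_ [Hk [Hik Hdk]]] Hnjk Hjk Heq.
  apply Hnjk. repeat split; auto.
  pose proof (Hdis i j Hi Hj Hij) as Dj. pose proof (Hdis i k Hi Hk Hik) as Dk.
  unfold closest in Heq. injection Heq as E1 E2.
  set (dj := dist sy i j) in *. set (dk := dist sy i k) in *.
  pose proof (dist_sq sy i j) as Sj. pose proof (dist_sq sy i k) as Sk. fold dj dk in Sj, Sk.
  assert (A1 : cx sy k - cx sy i = (cx sy j - cx sy i) * dk / dj).
  { assert (E1' : (cx sy j - cx sy i) / dj = (cx sy k - cx sy i) / dk) by lra.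
    replace (cx sy k - cx sy i) with ((cx sy k - cx sy i) / dk * dk) by (field; lra).
    rewrite <- E1'. field; lra. }
  assert (A2 : cy sy k - cy sy i = (cy sy j - cy sy i) * dk / dj).
  { assert (E2' : (cy sy j - cy sy i) / dj = (cy sy k - cy sy i) / dk) by lra.
    replace (cy sy k - cy sy i) with ((cy sy k - cy sy i) / dk * dk) by (field; lra).
    rewrite <- E2'. field; lra. }
  assert (Sq : (cx sy j - cx sy k) ^ 2 + (cy sy j - cy sy k) ^ 2 = (dj - dk) ^ 2).
  { replace (cx sy j - cx sy k) with ((cx sy j - cx sy i) - (cx sy k - cx sy i)) by ring.
    replace (cy sy j - cy sy k) with ((cy sy j - cy sy i) - (cy sy k - cy sy i)) by ring.
    rewrite A1, A2.
    set (a := cx sy j - cx sy i) in *. set (b := cy sy j - cy sy i) in *.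
    replace ((a - a * dk / dj) ^ 2 + (b - b * dk / dj) ^ 2) with
      ((a * a + b * b) * (dj - dk) ^ 2 / (dj * dj)) by (field; lra).
    rewrite <- Sj. field. lra. }
  unfold dist at 1. rewrite Sq.
  replace (2 + r sy) with (sqrt ((2 + r sy) ^ 2)).
  2: { rewrite <- Rsqr_pow2. apply sqrt_Rsqr. lra. }
  apply sqrt_le_1. apply pow2_ge_0. apply pow2_ge_0.
  assert (Rabs (dj - dk) <= 2 + r sy) by (apply Rabs_le; lra).
  rewrite <- !Rsqr_pow2. rewrite (Rsqr_abs (dj - dk)). apply Rsqr_incr_1; auto.
  apply Rabs_pos. lra.
Qed.


Definition PathP sy (p : nat -> nat) : Prop :=
    (forall i, (i < n sy)%nat -> (p i < n sy)%nat) /\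
    (forall i j, (i < n sy)%nat -> (j < n sy)%nat -> p i = p j -> i = j) /\
    (forall i j, (i < n sy)%nat -> (j < n sy)%nat ->
       (adj sy i j <-> (p i = Datatypes.S (p j) \/ p j = Datatypes.S (p i)))).

Lemma path_surj sy p : PathP sy p -> forall l, (l < n sy)%nat -> exists c, (c < n sy)%nat /\ p c = l.
Proof.
  intros [Hr [Hinj _]] l Hl.
  assert (Hnd : NoDup (map p (seq 0 (n sy)))).
  { apply NoDup_map_NoDup_ForallPairs. intros a b Ha Hb Hab.
    apply in_seq in Ha. apply in_seq in Hb. apply Hinj; auto; lia. apply seq_NoDup. }
  assert (Hinc : incl (map p (seq 0 (n sy))) (seq 0 (n sy))).
  { intros x Hx. apply in_map_iff in Hx. destruct Hx as [y [<- Hy]].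
    apply in_seq in Hy. apply in_seq. specialize (Hr y). lia. }
  pose proof (NoDup_length_incl (l' := seq 0 (n sy)) Hnd) as H.
  assert (Hin : In l (map p (seq 0 (n sy)))).
  { apply H. rewrite length_map. lia. exact Hinc. apply in_seq. lia. }
  apply in_map_iff in Hin. destruct Hin as [c [Hc Hc']]. apply in_seq in Hc'.
  exists c. split; auto; lia.
Qed.

Lemma adj_lt sy i j : adj sy i j -> (i < n sy)%nat /\ (j < n sy)%nat.
Proof. intros [H1 [H2 _]]. auto. Qed.

Lemma path_nadj sy p i j k : PathP sy p -> adj sy i j -> adj sy i k -> j <> k -> ~ adj sy j k.
Proof.
  intros HP Hij Hik Hjk Hjk'.
  destruct HP as [Hr [Hinj Hadj]].
  destruct (adj_lt _ _ _ Hij). destruct (adj_lt _ _ _ Hik).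
  apply Hadj in Hij; auto. apply Hadj in Hik; auto. apply Hadj in Hjk'; auto.
  assert (p j <> p k) by (intro E; apply Hjk; apply Hinj; auto). lia.
Qed.

Lemma no_double_link sy p i j k t : valid_system sy -> PathP sy p ->
  adj sy i j -> adj sy i k -> j <> k -> at_link sy i j t -> at_link sy i k t -> False.
Proof.
  intros Hv HP Hij Hik Hjk H1 H2.
  apply (closest_inj sy i j k Hv Hij Hik (path_nadj sy p i j k HP Hij Hik Hjk) Hjk).
  unfold at_link in *. rewrite <- H1, <- H2. reflexivity.
Qed.

Lemma has_nbr sy p c : PathP sy p -> (2 <= n sy)%nat -> (c < n sy)%nat -> exists d, adj sy c d.
Proof.
  intros HP Hn Hc. pose proof HP as [Hr [Hinj Hadj]].
  destruct (Nat.lt_ge_cases (Datatypes.S (p c)) (n sy)).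
  - destruct (path_surj sy p HP (Datatypes.S (p c)) H) as [d [Hd Hpd]].
    exists d. apply Hadj; auto.
  - assert (Hpc := Hr c Hc).
    destruct (path_surj sy p HP (p c - 1) ltac:(lia)) as [d [Hd Hpd]].
    exists d. apply Hadj; auto. lia.
Qed.

Lemma dist_sym sy i j : dist sy i j = dist sy j i.
Proof. unfold dist. f_equal. ring. Qed.

Lemma adj_sym sy i j : adj sy i j -> adj sy j i.
Proof. intros [H1 [H2 [H3 H4]]]. repeat split; auto. rewrite dist_sym; auto. Qed.

Lemma adj_char sy i j : valid_system sy -> adj sy i j -> char (at_link sy i j).
Proof.
  intros [Hr [Hdis Hg]] [H1 [H2 [H3 H4]]]. apply link_char.
  pose proof (Hdis i j H1 H2 H3). lra. auto.
Qed.

Lemma prev_pos_eq e u t o a v : 0 < t -> prev e u t o -> 0 <= a < t ->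
  (forall s, a <= s < t -> e u s = v) -> o = v.
Proof.
  intros Ht [[Ht0 _]|[_ [eps [Heps He]]]] Ha Hv. lra.
  set (s := Rmax a (t - eps / 2)).
  assert (a <= s) by apply Rmax_l. assert (t - eps/2 <= s) by apply Rmax_r.
  assert (s < t) by (apply Rmax_lub_lt; lra).
  rewrite <- (He s) by lra. apply Hv. lra.
Qed.

Lemma prev_unique e u t o1 o2 : 0 < t -> prev e u t o1 -> prev e u t o2 -> o1 = o2.
Proof.
  intros Ht H1 [[Ht0 _]|[_ [eps [Heps He]]]]. lra.
  apply (prev_pos_eq e u t o1 (Rmax 0 (t - eps/2)) o2 Ht H1).
  split. apply Rmax_l. apply Rmax_lub_lt; lra.
  intros s [Hs1 Hs2]. apply He; auto. apply Rle_trans with (2 := Hs1); apply Rmax_l.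
  assert (t - eps/2 <= Rmax 0 (t - eps/2)) by apply Rmax_r. lra.
Qed.

Lemma trans_char sy L lt e u t i : execution sy L lt e -> (u < n sy)%nat -> 0 <= t ->
  prev e u t (Some i) -> ~ has_left L lt u t ->
  e u t = Some i \/ exists j, adj sy i j /\ at_link sy i j t /\ empty_before sy e j t /\ e u t = Some j.
Proof.
  intros [_ [_ Htr]] Hu Ht Hp Hnl.
  destruct (Htr u t (Some i) Hu Ht Hp) as [_ H]. specialize (H Hnl). destruct H as [H1 H2].
  destruct (classic (exists j, adj sy i j /\ at_link sy i j t /\ empty_before sy e j t)) as [[j [Ha [Hl Hem]]]|Hno].
  - right. exists j. refine (conj Ha (conj Hl (conj Hem _))). apply H1; auto.
  - left. apply H2. intros j Ha Hl Hem. apply Hno. eauto.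
Qed.

Lemma surv_nleft sy L lt u t : surviving sy L u -> ~ has_left L lt u t.
Proof. intros [_ H] [H' _]. auto. Qed.

Lemma stay sy L lt e u s0 s1 c : execution sy L lt e -> surviving sy L u -> 0 <= s0 ->
  e u s0 = Some c ->
  (forall t, s0 < t < s1 -> forall d, adj sy c d -> ~ at_link sy c d t) ->
  forall t, s0 <= t < s1 -> e u t = Some c.
Proof.
  intros Hex Hsv Hs0 He0 Hno.
  assert (H : forall t, s0 <= t -> (t < s1 -> e u t = Some c)).
  { apply (real_ind s0 (fun t => t < s1 -> e u t = Some c)).
    - intros; auto.
    - intros t Ht IH Hts1.
      pose proof Hex as [Hprev [Hrc _]].
      destruct (Hprev u t (proj1 Hsv) ltac:(lra)) as [o Ho].
      assert (o = Some c).
      { apply (prev_pos_eq e u t o s0 (Some c)); auto; try lra.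
        intros s Hs. apply IH; lra. }
      subst o.
      destruct (trans_char sy L lt e u t c Hex (proj1 Hsv) ltac:(lra) Ho (surv_nleft sy L lt u t Hsv))
        as [H|[j [Ha [Hl _]]]]; auto.
      exfalso. apply (Hno t ltac:(lra) j Ha Hl).
    - intros t Ht Qt. pose proof Hex as [_ [Hrc _]].
      destruct (Hrc u t (proj1 Hsv) ltac:(lra)) as [eps [Heps He]].
      exists eps. split; auto. intros s Hs Hss1. rewrite He by lra. apply Qt. lra. }
  intros t Ht. apply H; lra.
Qed.


Lemma advance sy p L lt e u T s c :
  valid_system sy -> PathP sy p -> (2 <= n sy)%nat -> execution sy L lt e ->
  surviving sy L u -> starves_from sy e T u -> T <= s -> 0 <= s -> e u s = Some c -> (c < n sy)%nat ->
  exists d s', adj sy c d /\ s < s' <= s + 1 /\ at_link sy c d s' /\ e u s' = Some d /\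
    (forall t', s < t' < s' -> forall d', adj sy c d' -> ~ at_link sy c d' t').
Proof.
  intros Hv HP Hn Hex Hsv Hst HT Hs0 Hes Hc.
  destruct (next_link sy c s (fun d H => adj_char sy c d Hv H) (has_nbr sy p c HP Hn Hc))
    as [d [s' [Ha [Hs [Hl Hf]]]]].
  exists d, s'. refine (conj Ha (conj Hs (conj Hl (conj _ Hf)))).
  pose proof (stay sy L lt e u s s' c Hex Hsv Hs0 Hes Hf) as Hstay.
  pose proof Hex as [Hprev [_ Htr]].
  destruct (Hprev u s' (proj1 Hsv) ltac:(lra)) as [o Ho].
  assert (o = Some c).
  { apply (prev_pos_eq e u s' o s (Some c)); auto; try lra. }
  subst o.
  destruct (Htr u s' (Some c) (proj1 Hsv) ltac:(lra) Ho) as [_ H].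
  destruct (H (surv_nleft sy L lt u s' Hsv)) as [H1 _].
  apply H1; auto. apply (Hst s' c d); auto. lra.
Qed.

Definition Arr sy (e : nat -> R -> option nat) T (u : nat) s c c' : Prop :=
  T <= s /\ 0 <= s /\ e u s = Some c /\ adj sy c c' /\ at_link sy c c' s.

Lemma arr_step sy p L lt e u T s c c' :
  valid_system sy -> sync_schedule sy -> PathP sy p -> (2 <= n sy)%nat -> execution sy L lt e ->
  surviving sy L u -> starves_from sy e T u -> Arr sy e T u s c c' ->
  exists d s', s < s' /\ Arr sy e T u s' d c /\
    ((exists d'', adj sy c d'' /\ d'' <> c') -> d <> c').
Proof.
  intros Hv Hsy HP Hn Hex Hsv Hst [HT [Hs0 [Hes [Hacc Hlcc]]]].
  destruct (advance sy p L lt e u T s c Hv HP Hn Hex Hsv Hst HT Hs0 Hes (proj1 (adj_lt _ _ _ Hacc)))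
    as [d [s' [Ha [Hs [Hl [He Hf]]]]]].
  exists d, s'. split. lra. split.
  - refine (conj _ (conj _ (conj He (conj (adj_sym _ _ _ Ha) _)))); try lra.
    apply (proj2 (Hsy c d Ha)). exact Hl.
  - intros [d'' [Ha'' Hne]] Hdc. subst d.
    destruct (char_next _ (adj_char sy c d'' Hv Ha'') s) as [t'' [Ht'' [Hl'' _]]].
    assert (s' <= t'').
    { destruct (Rle_lt_dec s' t''); auto. exfalso. apply (Hf t'' ltac:(lra) d'' Ha'' Hl''). }
    assert (s + 1 <= s') by (apply (char_gap _ (adj_char sy c c' Hv Hacc) s s'); auto; lra).
    assert (t'' = s') by lra. subst t''.
    apply (no_double_link sy p c c' d'' s' Hv HP Hacc Ha'' (not_eq_sym Hne) Hl Hl'').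
Qed.

Lemma reach_top sy p L lt e u T s0 c0 c0' :
  valid_system sy -> sync_schedule sy -> PathP sy p -> (2 <= n sy)%nat -> execution sy L lt e ->
  surviving sy L u -> starves_from sy e T u -> Arr sy e T u s0 c0 c0' ->
  exists t x, T <= t /\ e u t = Some x /\ (x < n sy)%nat /\ p x = (n sy - 1)%nat.
Proof.
  intros Hv Hsy HP Hn Hex Hsv Hst.
  pose proof HP as [Hr [Hinj Hadj]].
  assert (Up : forall k s c c', Arr sy e T u s c c' -> Datatypes.S (p c') = p c ->
             (p c + k = n sy - 1)%nat ->
             exists t x, T <= t /\ e u t = Some x /\ (x < n sy)%nat /\ p x = (n sy - 1)%nat).
  { induction k as [|k IH]; intros s c c' HA Hl Hk.
    - exists s, c. destruct HA as [HT [_ [He [Ha _]]]]. split; auto. split; auto.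
      split. apply (adj_lt _ _ _ Ha). lia.
    - destruct (arr_step sy p L lt e u T s c c' Hv Hsy HP Hn Hex Hsv Hst HA) as [d [s' [Hss [HA' Hne]]]].
      destruct HA as [_ [_ [_ [Ha _]]]]. destruct (adj_lt _ _ _ Ha) as [Hc Hc'].
      destruct (path_surj sy p HP (Datatypes.S (p c)) ltac:(lia)) as [d'' [Hd'' Hpd'']].
      assert (Hdc : d <> c').
      { apply Hne. exists d''. split. apply Hadj; auto; lia. intro; subst; lia. }
      pose proof HA' as [X1 [X2 [X3 [Hda X5]]]].
      destruct (adj_lt _ _ _ Hda) as [Hd _].
      apply Hadj in Hda; auto.
      assert (p d <> p c') by (intro E; apply Hdc; apply Hinj; auto).
      apply (IH s' d c HA'); lia. }
  assert (Down : forall k s c c', Arr sy e T u s c c' -> p c' = Datatypes.S (p c) -> p c = k ->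
             exists t x, T <= t /\ e u t = Some x /\ (x < n sy)%nat /\ p x = (n sy - 1)%nat).
  { induction k as [|k IH]; intros s c c' HA Hl Hk.
    - destruct (arr_step sy p L lt e u T s c c' Hv Hsy HP Hn Hex Hsv Hst HA) as [d [s' [Hss [HA' Hne]]]].
      pose proof HA' as [X1 [X2 [X3 [Hda X5]]]].
      destruct (adj_lt _ _ _ Hda) as [Hd Hc].
      apply Hadj in Hda; auto.
      apply (Up (n sy - 2)%nat s' d c HA'); lia.
    - destruct (arr_step sy p L lt e u T s c c' Hv Hsy HP Hn Hex Hsv Hst HA) as [d [s' [Hss [HA' Hne]]]].
      destruct HA as [_ [_ [_ [Ha _]]]]. destruct (adj_lt _ _ _ Ha) as [Hc Hc'].
      pose proof (Hr c' Hc'). destruct (path_surj sy p HP k ltac:(lia)) as [d'' [Hd'' Hpd'']].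
      assert (Hdc : d <> c').
      { apply Hne. exists d''. split. apply Hadj; auto; lia. intro; subst; lia. }
      pose proof HA' as [X1 [X2 [X3 [Hda X5]]]].
      destruct (adj_lt _ _ _ Hda) as [Hd _].
      apply Hadj in Hda; auto.
      assert (p d <> p c') by (intro E; apply Hdc; apply Hinj; auto).
      apply (IH s' d c HA'); lia. }
  intros HA. pose proof HA as [_ [_ [_ [Ha _]]]]. destruct (adj_lt _ _ _ Ha) as [Hc Hc'].
  pose proof Ha as Ha'. apply Hadj in Ha'; auto.
  destruct Ha' as [H|H].
  - apply (Up (n sy - 1 - p c0)%nat s0 c0 c0' HA). lia. specialize (Hr c0 Hc). lia.
  - apply (Down (p c0) s0 c0 c0' HA H eq_refl).
Qed.


Lemma prev_at e u t o : 0 < t -> prev e u t o ->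
  exists eps, 0 < eps /\ forall s, 0 <= s -> t - eps < s -> s < t -> e u s = o.
Proof. intros Ht [[Ht0 _]|[_ H]]. lra. exact H. Qed.

Lemma pair_ind sy L lt e A B t0 (Rl : option nat -> option nat -> Prop) :
  execution sy L lt e -> (A < n sy)%nat -> (B < n sy)%nat -> 0 <= t0 ->
  Rl (e A t0) (e B t0) ->
  (forall t, t0 < t -> forall oA oB, prev e A t oA -> prev e B t oB -> Rl oA oB -> Rl (e A t) (e B t)) ->
  forall t, t0 <= t -> Rl (e A t) (e B t).
Proof.
  intros Hex HA HB Ht0 Hinit Hstep.
  pose proof Hex as [Hprev [Hrc _]].
  apply (real_ind t0 (fun t => Rl (e A t) (e B t))); auto.
  - intros t Ht IH.
    destruct (Hprev A t HA ltac:(lra)) as [oA HoA].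
    destruct (Hprev B t HB ltac:(lra)) as [oB HoB].
    destruct (prev_at e A t oA ltac:(lra) HoA) as [e1 [He1 H1]].
    destruct (prev_at e B t oB ltac:(lra) HoB) as [e2 [He2 H2]].
    set (s := Rmax t0 (t - Rmin e1 e2 / 2)).
    assert (Hm1 : Rmin e1 e2 <= e1) by apply Rmin_l.
    assert (Hm2 : Rmin e1 e2 <= e2) by apply Rmin_r.
    assert (Hm3 : 0 < Rmin e1 e2) by (apply Rmin_glb_lt; lra).
    assert (Hs1 : t0 <= s) by apply Rmax_l.
    assert (Hs2 : t - Rmin e1 e2 / 2 <= s) by apply Rmax_r.
    assert (Hs3 : s < t) by (apply Rmax_lub_lt; lra).
    apply (Hstep t Ht oA oB HoA HoB).
    rewrite <- (H1 s), <- (H2 s) by lra. apply IH. lra.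
  - intros t Ht Qt.
    destruct (Hrc A t HA ltac:(lra)) as [e1 [He1 H1]].
    destruct (Hrc B t HB ltac:(lra)) as [e2 [He2 H2]].
    exists (Rmin e1 e2). split. apply Rmin_glb_lt; lra.
    assert (Rmin e1 e2 <= e1) by apply Rmin_l. assert (Rmin e1 e2 <= e2) by apply Rmin_r.
    intros s Hs. rewrite H1, H2 by lra. exact Qt.
Qed.

Lemma pair_step sy p L lt e A B t a' b' :
  valid_system sy -> sync_schedule sy -> PathP sy p -> execution sy L lt e ->
  surviving sy L A -> surviving sy L B -> 0 <= t ->
  prev e A t (Some a') -> prev e B t (Some b') -> a' <> b' -> (a' < n sy)%nat -> (b' < n sy)%nat ->
  exists a b, e A t = Some a /\ e B t = Some b /\ a <> b /\ (a < n sy)%nat /\ (b < n sy)%nat /\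
    (a = a' \/ (adj sy a' a /\ a <> b')) /\ (b = b' \/ (adj sy b' b /\ b <> a')).
Proof.
  intros Hv Hsy HP Hex HsA HsB Ht HpA HpB Hab Ha Hb.
  destruct (trans_char sy L lt e A t a' Hex (proj1 HsA) Ht HpA (surv_nleft sy L lt A t HsA))
    as [EA|[j [Haj [Hlj [Hej EA]]]]];
  destruct (trans_char sy L lt e B t b' Hex (proj1 HsB) Ht HpB (surv_nleft sy L lt B t HsB))
    as [EB|[k [Hak [Hlk [Hek EB]]]]].
  - exists a', b'. repeat split; auto.
  - assert (k <> a') by (intro; subst; apply (Hek A (proj1 HsA) HpA)).
    exists a', k. refine (conj EA (conj EB (conj _ (conj Ha (conj _ (conj _ _)))))); auto.
    apply (adj_lt _ _ _ Hak).
  - assert (j <> b') by (intro; subst; apply (Hej B (proj1 HsB) HpB)).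
    exists j, b'. refine (conj EA (conj EB (conj _ (conj _ (conj Hb (conj _ _)))))); auto.
    apply (adj_lt _ _ _ Haj).
  - assert (k <> a') by (intro; subst; apply (Hek A (proj1 HsA) HpA)).
    assert (j <> b') by (intro; subst; apply (Hej B (proj1 HsB) HpB)).
    exists j, k. refine (conj EA (conj EB (conj _ (conj _ (conj _ (conj _ _)))))); auto.
    + intro; subst k.
      apply (no_double_link sy p j a' b' t Hv HP (adj_sym _ _ _ Haj) (adj_sym _ _ _ Hak) Hab).
      apply (proj1 (proj2 (Hsy a' j Haj) t)); auto.
      apply (proj1 (proj2 (Hsy b' j Hak) t)); auto.
    + apply (adj_lt _ _ _ Haj).
    + apply (adj_lt _ _ _ Hak).
Qed.


Lemma two_survivors sy k L lt : departure sy k L lt -> (k + 2 <= n sy)%nat ->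
  exists A B, A <> B /\ surviving sy L A /\ surviving sy L B.
Proof.
  intros [Hnd [Hlen [Hin _]]] Hk.
  destruct (classic (exists A, (A < n sy)%nat /\ ~ In A L)) as [[A [HA HAL]]|Hno].
  - destruct (classic (exists B, (B < n sy)%nat /\ ~ In B L /\ B <> A)) as [[B [HB [HBL HBA]]]|Hno2].
    + exists A, B. split; auto. split; split; auto.
    + exfalso.
      assert (incl (seq 0 (n sy)) (A :: L)).
      { intros x Hx. apply in_seq in Hx.
        destruct (Nat.eq_dec x A) as [->|Hne]. left; auto.
        right. apply NNPP. intro Hx'. apply Hno2. exists x. repeat split; auto; lia. }
      pose proof (NoDup_incl_length (seq_NoDup (n sy) 0) H).
      rewrite length_seq in H0. simpl in H0. lia.
  - exfalso.
    assert (incl (seq 0 (n sy)) L).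
    { intros x Hx. apply in_seq in Hx. apply NNPP. intro Hx'. apply Hno. exists x. split; auto. lia. }
    pose proof (NoDup_incl_length (seq_NoDup (n sy) 0) H).
    rewrite length_seq in H0. lia.
Qed.

Lemma ordered_contra sy p L lt e T A B a0 b0 :
  valid_system sy -> sync_schedule sy -> PathP sy p -> (2 <= n sy)%nat -> execution sy L lt e ->
  surviving sy L A -> surviving sy L B -> starves_from sy e T A -> 0 <= T ->
  e A T = Some a0 -> e B T = Some b0 -> (a0 < n sy)%nat -> (b0 < n sy)%nat -> (p a0 < p b0)%nat -> False.
Proof.
  intros Hv Hsy HP Hn Hex HsA HsB HstA HT EA EB Ha0 Hb0 Hlt.
  pose proof HP as [Hr [Hinj Hadj]].
  pose proof (pair_ind sy L lt e A B T
    (fun oA oB => exists a b, oA = Some a /\ oB = Some b /\ (a < n sy)%nat /\ (b < n sy)%nat /\ (p a < p b)%nat)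
    Hex (proj1 HsA) (proj1 HsB) HT) as HO.
  assert (O : forall t, T <= t -> exists a b, e A t = Some a /\ e B t = Some b /\ (a < n sy)%nat /\
             (b < n sy)%nat /\ (p a < p b)%nat).
  { apply HO. exists a0, b0. auto.
    intros t Ht oA oB HpA HpB [a' [b' [-> [-> [Ha' [Hb' Hl']]]]]].
    assert (a' <> b') by (intro; subst; lia).
    destruct (pair_step sy p L lt e A B t a' b' Hv Hsy HP Hex HsA HsB ltac:(lra) HpA HpB H Ha' Hb')
      as [a [b [E1 [E2 [Hab [Ha [Hb [Ca Cb]]]]]]]].
    exists a, b. refine (conj E1 (conj E2 (conj Ha (conj Hb _)))).
    assert (p a <> p b) by (intro E; apply Hab; apply Hinj; auto).
    destruct Ca as [->|[Ca1 Ca2]]; destruct Cb as [->|[Cb1 Cb2]]; try lia.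
    - apply Hadj in Cb1; auto. assert (p b <> p a') by (intro E; apply Cb2; apply Hinj; auto). lia.
    - apply Hadj in Ca1; auto. assert (p a <> p b') by (intro E; apply Ca2; apply Hinj; auto). lia.
    - apply Hadj in Cb1; auto. assert (p b <> p a') by (intro E; apply Cb2; apply Hinj; auto).
      apply Hadj in Ca1; auto. assert (p a <> p b') by (intro E; apply Ca2; apply Hinj; auto). lia. }
  destruct (advance sy p L lt e A T T a0 Hv HP Hn Hex HsA HstA (Rle_refl T) HT EA Ha0)
    as [d [s' [Had [Hs' [Hl [Ed _]]]]]].
  assert (HArr : Arr sy e T A s' d a0).
  { refine (conj _ (conj _ (conj Ed (conj (adj_sym _ _ _ Had) _)))); try lra.
    apply (proj2 (Hsy a0 d Had)). exact Hl. }
  destruct (reach_top sy p L lt e A T s' d a0 Hv Hsy HP Hn Hex HsA HstA HArr) as [t [x [Ht [Ex [Hx Hpx]]]]].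
  destruct (O t Ht) as [a [b [E1 [E2 [Ha [Hb Hab]]]]]].
  rewrite Ex in E1. injection E1 as ->. specialize (Hr b Hb). lia.
Qed.

Lemma tol_main sy : valid_system sy -> sync_schedule sy -> is_path_graph sy -> (2 <= n sy)%nat ->
  tolerates sy (n sy - 2).
Proof.
  intros Hv Hsy [p HP] Hn. fold (PathP sy p) in HP.
  split. lia.
  intros L lt Hdep e Hex [T [HT Hst]].
  destruct (two_survivors sy (n sy - 2) L lt Hdep ltac:(lia)) as [A [B [HAB [HsA HsB]]]].
  pose proof HP as [Hr [Hinj Hadj]].
  set (Rl := fun oA oB : option nat => exists a b, oA = Some a /\ oB = Some b /\ a <> b /\
      (a < n sy)%nat /\ (b < n sy)%nat).
  assert (Hstep : forall t, 0 <= t -> forall oA oB, prev e A t oA -> prev e B t oB -> Rl oA oB -> Rl (e A t) (e B t)).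
  { intros t Ht oA oB HpA HpB [a' [b' [-> [-> [Hne [Ha' Hb']]]]]].
    destruct (pair_step sy p L lt e A B t a' b' Hv Hsy HP Hex HsA HsB Ht HpA HpB Hne Ha' Hb')
      as [a [b [E1 [E2 [Hab [Ha [Hb _]]]]]]].
    exists a, b. auto. }
  assert (D : forall t, 0 <= t -> Rl (e A t) (e B t)).
  { apply (pair_ind sy L lt e A B 0 Rl Hex (proj1 HsA) (proj1 HsB) (Rle_refl 0)).
    - apply (Hstep 0 (Rle_refl 0) (Some A) (Some B)).
      left; auto. left; auto. exists A, B. repeat split; auto. apply HsA. apply HsB.
    - intros t Ht. apply Hstep. lra. }
  destruct (D T HT) as [a0 [b0 [EA [EB [Hne [Ha0 Hb0]]]]]].
  assert (p a0 <> p b0) by (intro E; apply Hne; apply Hinj; auto).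
  destruct (Nat.lt_gt_cases (p a0) (p b0)) as [[Hlt|Hlt] _]; auto.
  - apply (ordered_contra sy p L lt e T A B a0 b0 Hv Hsy HP Hn Hex HsA HsB (Hst A HsA) HT EA EB Ha0 Hb0 Hlt).
  - apply (ordered_contra sy p L lt e T B A b0 a0 Hv Hsy HP Hn Hex HsB HsA (Hst B HsB) HT EB EA Hb0 Ha0 Hlt).
Qed.


Definition tauf sy c d : R :=
  epsilon (inhabits 0) (fun tau => forall t, at_link sy c d t <-> exists k : Z, t = tau + IZR k).

Lemma tauf_spec sy c d : valid_system sy -> adj sy c d ->
  forall t, at_link sy c d t <-> exists k : Z, t = tauf sy c d + IZR k.
Proof.
  intros Hv Ha. unfold tauf.
  apply (@epsilon_spec R (inhabits 0) (fun tau => forall t, at_link sy c d t <-> exists k : Z, t = tau + IZR k)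
    (adj_char sy c d Hv Ha)).
Qed.

Definition gam (x : R) : R := x + IZR (up (- x)).

Lemma gam_pos x : 0 < gam x.
Proof. unfold gam. destruct (archimed (- x)). lra. Qed.

Lemma gam_le x k : 0 < x + IZR k -> gam x <= x + IZR k.
Proof.
  intros H. unfold gam. destruct (archimed (- x)) as [H1 H2].
  assert (IZR (up (-x) - 1) < IZR k) by (rewrite minus_IZR; lra).
  apply lt_IZR in H0. assert (IZR (up (- x)) <= IZR k) by (apply IZR_le; lia). lra.
Qed.

Fixpoint Fmin (m : nat) (f : nat -> R) : R :=
  match m with O => 1 | S m' => Rmin (f m') (Fmin m' f) end.

Lemma Fmin_pos m f : (forall i, (i < m)%nat -> 0 < f i) -> 0 < Fmin m f.
Proof.
  induction m; simpl; intros H. lra. apply Rmin_glb_lt. apply H; lia. apply IHm. intros; apply H; lia.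
Qed.

Lemma Fmin_le m f i : (i < m)%nat -> Fmin m f <= f i.
Proof.
  induction m; simpl; intros H. lia.
  destruct (Nat.eq_dec i m) as [->|Hne]. apply Rmin_l.
  apply Rle_trans with (Fmin m f). apply Rmin_r. apply IHm. lia.
Qed.

Definition delta sy : R :=
  Fmin (n sy) (fun c => Fmin (n sy) (fun c' => Fmin (n sy) (fun d => gam (tauf sy c d - tauf sy c c')))).

Lemma delta_pos sy : 0 < delta sy.
Proof. unfold delta. repeat (apply Fmin_pos; intros). apply gam_pos. Qed.

Lemma gap_lemma sy c c' d s s' : valid_system sy -> adj sy c c' -> adj sy c d ->
  at_link sy c c' s -> at_link sy c d s' -> s < s' -> delta sy <= s' - s.
Proof.
  intros Hv Ha1 Ha2 Hl1 Hl2 Hlt.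
  destruct (adj_lt _ _ _ Ha1) as [Hc Hc']. destruct (adj_lt _ _ _ Ha2) as [_ Hd].
  apply (tauf_spec sy c c' Hv Ha1) in Hl1. apply (tauf_spec sy c d Hv Ha2) in Hl2.
  destruct Hl1 as [k1 ->]. destruct Hl2 as [k2 ->].
  apply Rle_trans with (gam (tauf sy c d - tauf sy c c')).
  - unfold delta. eapply Rle_trans. apply (Fmin_le _ _ c Hc).
    eapply Rle_trans. apply (Fmin_le _ _ c' Hc'). apply (Fmin_le _ (fun d => gam (tauf sy c d - tauf sy c c')) d Hd).
  - replace (tauf sy c d + IZR k2 - (tauf sy c c' + IZR k1))
      with (tauf sy c d - tauf sy c c' + IZR (k2 - k1)) by (rewrite minus_IZR; ring).
    apply gam_le. rewrite minus_IZR. lra.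
Qed.

Definition nxP sy c s (ds : nat * R) : Prop :=
  adj sy c (fst ds) /\ s < snd ds /\ at_link sy c (fst ds) (snd ds) /\
  (forall t', s < t' < snd ds -> forall d', adj sy c d' -> ~ at_link sy c d' t').

Definition nxf sy c s : nat * R := epsilon (inhabits (0%nat, 0)) (nxP sy c s).

Lemma nxf_spec sy p c s : valid_system sy -> PathP sy p -> (2 <= n sy)%nat -> (c < n sy)%nat ->
  nxP sy c s (nxf sy c s).
Proof.
  intros Hv HP Hn Hc. unfold nxf. apply epsilon_spec.
  destruct (next_link sy c s (fun d H => adj_char sy c d Hv H) (has_nbr sy p c HP Hn Hc))
    as [d [s' [Ha [Hs [Hl Hf]]]]].
  exists (d, s'). unfold nxP; simpl. repeat split; try apply Ha; auto; lra.
Qed.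

Fixpoint traj sy (m : nat) : nat * R :=
  match m with
  | O => (0%nat, 0)
  | S m' => nxf sy (fst (traj sy m')) (snd (traj sy m'))
  end.

Definition cc sy m := fst (traj sy m).
Definition ss sy m := snd (traj sy m).

Section Traj.
Variable sy : system.
Variable p : nat -> nat.
Hypothesis Hv : valid_system sy.
Hypothesis Hsy : sync_schedule sy.
Hypothesis HP : PathP sy p.
Hypothesis Hn : (2 <= n sy)%nat.

Lemma traj_step m : (cc sy m < n sy)%nat /\ nxP sy (cc sy m) (ss sy m) (cc sy (S m), ss sy (S m)).
Proof.
  induction m.
  - assert (Hc : (cc sy 0 < n sy)%nat) by (unfold cc; simpl; lia). split; auto.
    unfold cc at 2, ss at 2. simpl traj. rewrite <- surjective_pairing.
    apply (nxf_spec sy p); auto.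
  - destruct IHm as [Hc Hs].
    assert (Hc' : (cc sy (S m) < n sy)%nat).
    { destruct Hs as [Ha _]. simpl in Ha. apply (adj_lt _ _ _ Ha). }
    split; auto.
    unfold cc at 2, ss at 2. simpl traj. fold (cc sy (S m)) (ss sy (S m)).
    rewrite <- surjective_pairing. apply (nxf_spec sy p); auto.
Qed.

Lemma ss0 : ss sy 0 = 0.
Proof. reflexivity. Qed.

Lemma ss_lt m : ss sy m < ss sy (S m).
Proof. destruct (traj_step m) as [_ [_ [H _]]]. exact H. Qed.

Lemma ss_mono m m' : (m <= m')%nat -> ss sy m <= ss sy m'.
Proof.
  induction 1. lra. pose proof (ss_lt m0). lra.
Qed.

Lemma ss_strict m m' : (m < m')%nat -> ss sy m < ss sy m'.
Proof.
  intros H. pose proof (ss_lt m). pose proof (ss_mono (S m) m' H). lra.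
Qed.

Lemma ss_gap m : delta sy <= ss sy (S (S m)) - ss sy (S m).
Proof.
  destruct (traj_step m) as [_ [Ha1 [_ [Hl1 _]]]]. simpl in Ha1, Hl1.
  destruct (traj_step (S m)) as [_ [Ha2 [Hlt [Hl2 _]]]]. simpl in Ha2, Hl2, Hlt.
  apply (gap_lemma sy (cc sy (S m)) (cc sy m) (cc sy (S (S m)))); auto.
  apply adj_sym; auto. apply (proj2 (Hsy _ _ Ha1)). auto.
Qed.

Lemma ss_lower m : INR m * delta sy <= ss sy (S m).
Proof.
  induction m. simpl. pose proof (ss_lt 0). rewrite ss0 in H. lra.
  rewrite S_INR. pose proof (ss_gap m). lra.
Qed.

Lemma ss_unbounded t : exists m, t < ss sy m.
Proof.
  pose proof (delta_pos sy) as Hd.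
  destruct (archimed (t / delta sy)) as [H1 _].
  destruct (Z_le_gt_dec (up (t / delta sy)) 0) as [Hz|Hz].
  - exists 1%nat. pose proof (ss_lt 0). rewrite ss0 in H.
    apply IZR_le in Hz. assert (t / delta sy < 0) by lra.
    assert (t < 0). { apply Rmult_lt_reg_r with (/ delta sy). apply Rinv_0_lt_compat; lra.
      rewrite Rmult_0_l. exact H0. } lra.
  - exists (S (Z.to_nat (up (t / delta sy)))).
    pose proof (ss_lower (Z.to_nat (up (t / delta sy)))).
    rewrite INR_IZR_INZ, Z2Nat.id in H by lia.
    assert (t = t / delta sy * delta sy) by (field; lra).
    assert (t / delta sy * delta sy < IZR (up (t / delta sy)) * delta sy)
      by (apply Rmult_lt_compat_r; lra). lra.
Qed.

Lemma index1 t : 0 <= t -> exists m, ss sy m <= t < ss sy (S m).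
Proof.
  intros Ht. destruct (ss_unbounded t) as [M HM].
  revert HM. induction M; intros HM.
  - rewrite ss0 in HM. lra.
  - destruct (Rle_lt_dec (ss sy M) t). exists M. split; auto. auto.
Qed.

Lemma index2 t : 0 < t -> exists m, ss sy m < t <= ss sy (S m).
Proof.
  intros Ht. destruct (ss_unbounded t) as [M HM].
  assert (HM' : t <= ss sy M) by lra. clear HM.
  revert HM'. induction M; intros HM.
  - rewrite ss0 in HM. lra.
  - destruct (Rle_lt_dec t (ss sy M)). auto. exists M. split; auto.
Qed.

Lemma index_unique m m' t : ss sy m <= t < ss sy (S m) -> ss sy m' <= t < ss sy (S m') -> m = m'.
Proof.
  intros [H1 H2] [H3 H4].
  destruct (Nat.lt_trichotomy m m') as [Hl|[Heq|Hl]]; auto.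
  - pose proof (ss_mono (S m) m' Hl). lra.
  - pose proof (ss_mono (S m') m Hl). lra.
Qed.

End Traj.


Definition eU sy (t : R) : nat :=
  cc sy (epsilon (inhabits 0%nat) (fun m => ss sy m <= t < ss sy (S m))).

Definition ex1 sy (v : nat) (t : R) : option nat :=
  if Nat.eq_dec v 0 then Some (eU sy t) else None.

Section NT.
Variable sy : system.
Variable p : nat -> nat.
Hypothesis Hv : valid_system sy.
Hypothesis Hsy : sync_schedule sy.
Hypothesis HP : PathP sy p.
Hypothesis Hn : (2 <= n sy)%nat.

Lemma eU_at t m : 0 <= t -> ss sy m <= t < ss sy (S m) -> eU sy t = cc sy m.
Proof.
  intros Ht Hm. unfold eU. f_equal.
  apply (index_unique sy p Hv HP Hn _ _ t); auto.
  apply (@epsilon_spec nat (inhabits 0%nat) (fun m => ss sy m <= t < ss sy (S m))).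
  apply (index1 sy p Hv Hsy HP Hn t Ht).
Qed.

Lemma ex1_other v t : v <> 0%nat -> ex1 sy v t = None.
Proof. intros H. unfold ex1. destruct (Nat.eq_dec v 0); congruence. Qed.

Lemma ex1_0 t : ex1 sy 0 t = Some (eU sy t).
Proof. reflexivity. Qed.

Lemma prev_none v t : v <> 0%nat -> 0 < t -> prev (ex1 sy) v t None.
Proof.
  intros Hv0 Ht. right. split; auto. exists t. split; auto. intros. apply ex1_other; auto.
Qed.

Lemma prevU t m : 0 < t -> ss sy m < t <= ss sy (S m) -> prev (ex1 sy) 0 t (Some (cc sy m)).
Proof.
  intros Ht Hm. right. split; auto. exists (t - ss sy m). split. lra.
  intros s Hs0 Hs1 Hs2. rewrite ex1_0. f_equal. apply eU_at; auto. lra.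
Qed.

Lemma ss_nonneg m : 0 <= ss sy m.
Proof. rewrite <- (ss0 sy). apply (ss_mono sy p Hv HP Hn). lia. Qed.

Lemma ex1_exec : execution sy (seq 1 (n sy - 1)) (fun _ => 0) (ex1 sy).
Proof.
  split; [|split].
  - intros u t Hu Ht. destruct (Req_dec t 0) as [->|Hne].
    + exists (Some u). left; auto.
    + destruct (Nat.eq_dec u 0) as [->|Hu0].
      * destruct (index2 sy p Hv Hsy HP Hn t ltac:(lra)) as [m Hm].
        exists (Some (cc sy m)). apply prevU; auto. lra.
      * exists None. apply prev_none; auto. lra.
  - intros u t Hu Ht. destruct (Nat.eq_dec u 0) as [->|Hu0].
    + destruct (index1 sy p Hv Hsy HP Hn t Ht) as [m Hm].
      exists (ss sy (S m) - t). split. lra.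
      intros s Hs1 Hs2. rewrite !ex1_0. rewrite (eU_at t m), (eU_at s m); auto; lra.
    + exists 1. split. lra. intros. rewrite !ex1_other; auto.
  - intros u t o Hu Ht Hp. unfold transition. split.
    + intros [Hin _]. apply in_seq in Hin. apply ex1_other. lia.
    + intros Hnl.
      assert (u = 0%nat).
      { destruct (Nat.eq_dec u 0); auto. exfalso. apply Hnl. split. apply in_seq. lia. auto. }
      subst u.
      destruct (Req_dec t 0) as [->|Htne].
      * assert (o = Some 0%nat). { destruct Hp as [[_ Ho]|[Hlt _]]. auto. lra. }
        subst o. split.
        -- intros j Ha Hl Hem. exfalso. apply (Hem j (proj2 (adj_lt _ _ _ Ha))). left; auto.
        -- intros _. rewrite ex1_0. f_equal. rewrite (eU_at 0 0). reflexivity. lra.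
           pose proof (ss_lt sy p Hv HP Hn 0). rewrite ss0 in *. lra.
      * assert (Htp : 0 < t) by lra.
        destruct (index2 sy p Hv Hsy HP Hn t Htp) as [m Hm].
        assert (o = Some (cc sy m)) by (apply (prev_unique (ex1 sy) 0 t); auto; apply prevU; auto).
        subst o.
        destruct (traj_step sy p Hv HP Hn m) as [Hcm [Ha1 [Hlt1 [Hl1 Hf1]]]]. simpl in *.
        destruct (Rlt_le_dec t (ss sy (S m))) as [Hlt|Hge].
        -- split.
           ++ intros j Ha Hl Hem. exfalso. apply (Hf1 t ltac:(lra) j Ha Hl).
           ++ intros _. rewrite ex1_0. f_equal. apply eU_at; lra.
        -- assert (Heq : t = ss sy (S m)) by lra. subst t.
           assert (HeS : ex1 sy 0 (ss sy (S m)) = Some (cc sy (S m))).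
           { rewrite ex1_0. f_equal. apply eU_at. lra. split. lra.
             apply (ss_lt sy p Hv HP Hn). }
           split.
           ++ intros j Ha Hl Hem. rewrite HeS. f_equal.
              destruct (Nat.eq_dec (cc sy (S m)) j) as [->|Hne]; auto. exfalso.
              apply (no_double_link sy p (cc sy m) (cc sy (S m)) j (ss sy (S m)) Hv HP Ha1 Ha Hne Hl1 Hl).
           ++ intros H. exfalso. apply (H (cc sy (S m)) Ha1 Hl1).
              intros v Hvn Hpv. destruct (Nat.eq_dec v 0) as [->|Hv0].
              ** assert (Some (cc sy m) = Some (cc sy (S m)))
                   by (apply (prev_unique (ex1 sy) 0 (ss sy (S m))); auto).
                 injection H0 as H0. destruct Ha1 as [_ [_ [Hneq _]]]. auto.
              ** assert (None = Some (cc sy (S m)))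
                   by (apply (prev_unique (ex1 sy) v (ss sy (S m))); auto; apply prev_none; auto).
                 discriminate.
Qed.

Lemma not_tol_n1 : ~ tolerates sy (n sy - 1).
Proof.
  intros [_ H].
  assert (Hdep : departure sy (n sy - 1) (seq 1 (n sy - 1)) (fun _ => 0)).
  { split. apply seq_NoDup. split. apply length_seq. split.
    intros u Hu. apply in_seq in Hu. lia. intros; lra. }
  apply (H _ _ Hdep (ex1 sy) ex1_exec).
  exists 1. split. lra. intros u [Hu Hnin].
  assert (u = 0%nat).
  { destruct (Nat.eq_dec u 0); auto. exfalso. apply Hnin. apply in_seq. lia. }
  subst u. intros t i j Ht Hpi Ha Hl v Hvn Hpv.
  destruct (Nat.eq_dec v 0) as [->|Hv0].
  - assert (Some i = Some j) by (apply (prev_unique (ex1 sy) 0 t); auto; lra).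
    injection H0 as ->. destruct Ha as [_ [_ [Hneq _]]]. auto.
  - assert (None = Some j) by (apply (prev_unique (ex1 sy) v t); auto; try lra; apply prev_none; auto; lra).
    discriminate.
Qed.

End NT.

Lemma not_tol_n sy : ~ tolerates sy (n sy).
Proof.
  intros [_ H].
  assert (Hdep : departure sy (n sy) (seq 0 (n sy)) (fun _ => 0)).
  { split. apply seq_NoDup. split. apply length_seq. split.
    intros u Hu. apply in_seq in Hu. lia. intros; lra. }
  apply (H _ _ Hdep (fun _ _ => None)).
  - split; [|split].
    + intros u t Hu Ht. destruct (Req_dec t 0) as [->|Hne].
      * exists (Some u). left; auto.
      * exists None. right. split. lra. exists t. split. lra. auto.
    + intros u t Hu Ht. exists 1. split. lra. auto.
    + intros u t o Hu Ht Hp. split. auto. intros Hnl. exfalso. apply Hnl. split.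
      apply in_seq. lia. auto.
  - exists 0. split. lra. intros u [Hu Hnin]. exfalso. apply Hnin. apply in_seq. lia.
Qed.

Theorem lemma21 (sy : system) :
  valid_system sy -> sync_schedule sy -> is_path_graph sy -> (2 <= n sy)%nat ->
  isolation_resilience sy (n sy - 2).
Proof.
  intros Hv Hsy Hp Hn. split.
  - apply tol_main; auto.
  - intros k' [Hk Htol].
    destruct Hp as [p HP]. fold (PathP sy p) in HP.
    destruct (Nat.eq_dec k' (n sy)) as [->|Hne1].
    + exfalso. apply (not_tol_n sy). split; auto.
    + destruct (Nat.eq_dec k' (n sy - 1)) as [->|Hne2].
      * exfalso. apply (not_tol_n1 sy p Hv Hsy HP Hn). split; auto.
      * lia.
Qed.
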